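(* Let $(G,H,\mathcal{L})$ be a cut-and-project scheme and let $a\in G$. Then there exist a cut-and-project scheme $(G,H',\mathcal{L}')$ and some $b\in H'$ such that: (a) $H$ is (identified with) an open and closed subgroup of $H'$; (b) $(a,b)\in\mathcal{L}'$; (c) $\mathcal{L}'\cap(G\times H)=\mathcal{L}$; (d) for each $W\subseteq H$ we have $\Lambda_W=\pi^G(\mathcal{L}'\cap(G\times W))$ and $a+\Lambda_W=\pi^G(\mathcal{L}'\cap(G\times(b+W)))$; (e) for each $W\subseteq H$, both $W\subseteq H'$ and $b+W\subseteq H'$ have each of the properties precompactness, non-empty interior, topological regularity and measure-theoretic regularity (with respect to $H'$) which $W$ has as a subset of $H$; (f) if $H$ is metrisable, then $H'$ is metrisable.
   Context: A cut-and-project scheme $(G,H,\mathcal{L})$ consists of locally compact abelian groups $G,H$ and a discrete cocompact subgroup (lattice) $\mathcal{L}\subseteq G\times H$ such that the coordinate projection $\pi^G$ restricted to $\mathcal{L}$ is injective and $\pi^H(\mathcal{L})$ is dense in $H$. For $W\subseteq H$ the projection set is $\Lambda_W=\pi^G(\mathcal{L}\cap(G\times W))$. For a set $W\subseteq H$: precompact means $\overline{W}$ is compact; topologically regular means $\overline{W}=\overline{W^\circ}$; measure-theoretically regular means the boundary $\partial W=\overline W\setminus W^\circ$ has Haar measure zero. *)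

(* Defs.v *)
From HB Require Import structures.
From mathcomp Require Import all_boot all_order all_algebra.
From mathcomp Require Import all_classical all_reals all_analysis.
From mathcomp Require Import Rstruct Rstruct_topology.
Set Implicit Arguments. Unset Strict Implicit. Unset Printing Implicit Defensive.
Import Order.TTheory GRing.Theory Num.Theory.
Local Open Scope classical_set_scope.
Local Open Scope ring_scope.

Notation RR := Rdefinitions.R.

Definition locally_compact_space (T : topologicalType) : Prop :=
  forall x : T, exists K : set T, nbhs x K /\ compact K.

Definition LCA (T : topologicalZmodType) : Prop :=
  hausdorff_space T /\ locally_compact_space T.

Definition is_subgroup (T : zmodType) (A : set T) : Prop :=
  A 0 /\ forall x y, A x -> A y -> A (x - y).

Definition pair_add (G H : zmodType) (p q : G * H) : G * H :=
  (p.1 + q.1, p.2 + q.2).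
Definition pair_zero (G H : zmodType) : G * H := (0, 0).
Definition pair_sub (G H : zmodType) (p q : G * H) : G * H :=
  (p.1 - q.1, p.2 - q.2).

Definition is_pair_subgroup (G H : zmodType) (L : set (G * H)) : Prop :=
  L (pair_zero G H) /\ forall p q, L p -> L q -> L (pair_sub p q).

Definition discrete_subset (T : topologicalType) (A : set T) : Prop :=
  forall x, A x -> exists U : set T, nbhs x U /\ U `&` A = [set x].

(* cocompact: the quotient (G x H)/L is compact, i.e. there is a compact
   set K of G x H whose L-translates cover G x H *)
Definition cocompact_pair (G H : topologicalZmodType) (L : set (G * H)) : Prop :=
  exists K : set (G * H), compact K /\
    forall p : G * H, exists k l, K k /\ L l /\ p = pair_add k l.

Definition lattice (G H : topologicalZmodType) (L : set (G * H)) : Prop :=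
  [/\ is_pair_subgroup L, discrete_subset L & cocompact_pair L].

Definition cut_and_project (G H : topologicalZmodType) (L : set (G * H)) : Prop :=
  [/\ LCA G, LCA H, lattice L,
      {in L &, injective (fun p : G * H => p.1)}
    & dense [set p.2 | p in L]].

Definition proj_set (G H : Type) (L : set (G * H)) (W : set H) : set G :=
  [set p.1 | p in L `&` [set q | W q.2]].

Definition precompact_set (T : topologicalType) (W : set T) : Prop :=
  compact (closure W).

Definition nonempty_interior (T : topologicalType) (W : set T) : Prop :=
  interior W !=set0.

Definition topologically_regular (T : topologicalType) (W : set T) : Prop :=
  closure W = closure (interior W).

Definition boundary (T : topologicalType) (W : set T) : set T :=
  closure W `\` interior W.

(* Haar measure: a nonzero translation-invariant Radon measure on the Borel
   sets (sigma-algebra generated by the open sets). *)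
Definition borel (T : topologicalType) : set (set T) := <<s (@open T) >>.

Definition is_haar_measure (T : topologicalZmodType)
    (mu : set T -> \bar RR) : Prop :=
  mu set0 = 0%E /\
     (forall A, borel A -> (0 <= mu A)%E) /\
      (forall F : nat -> set T, (forall n, borel (F n)) -> trivIset setT F ->
         (fun n => \sum_(k < n) mu (F k))%E @ \oo --> mu (\bigcup_n F n)) /\
      (forall (x : T) A, borel A -> mu [set x + a | a in A] = mu A) /\
      (forall K, compact K -> (mu K < +oo)%E) /\
      (forall A, borel A ->
         mu A = ereal_inf [set mu U | U in [set U | open U /\ A `<=` U]]) /\
      (forall U, open U ->
         mu U = ereal_sup [set mu K | K in [set K | compact K /\ K `<=` U]]) /\
     (exists A, borel A /\ mu A != 0%E).

(* Haar null set; by uniqueness of Haar measure up to a positive scalar,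
   this is equivalent to being null for one (any) Haar measure. *)
Definition haar_null (T : topologicalZmodType) (A : set T) : Prop :=
  forall mu : set T -> \bar RR, is_haar_measure mu -> mu A = 0%E.

Definition measure_regular (T : topologicalZmodType) (W : set T) : Prop :=
  haar_null (boundary W).

Definition metrisable (T : topologicalType) : Prop :=
  exists d : T -> T -> RR,
    [/\ (forall x y, 0 <= d x y),
        (forall x y, d x y = 0 <-> x = y),
        (forall x y, d x y = d y x),
        (forall x y z, d x z <= d x y + d y z)
      & forall A : set T, open A <->
          (forall x, A x -> exists2 e : RR, 0 < e & [set y | d x y < e] `<=` A)].

Definition open_closed_subgroup_embedding (H H' : topologicalZmodType)
    (j : H -> H') : Prop :=
  [/\ injective j,
      (forall x y, j (x + y) = j x + j y),
      continuous j,
      (forall U : set H, open U -> open (j @` U))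
    & open (range j) /\ closed (range j)].

(* Main.v *)
Require Import Defs.
From HB Require Import structures.
From mathcomp Require Import all_boot all_order all_algebra.
From mathcomp Require Import all_classical all_reals all_analysis.
From mathcomp Require Import lra Rstruct Rstruct_topology.
Set Implicit Arguments. Unset Strict Implicit. Unset Printing Implicit Defensive.
Import Order.TTheory GRing.Theory Num.Theory.
Local Open Scope classical_set_scope.
Local Open Scope ring_scope.

Definition Tc (H : topologicalZmodType) (N : int) (hz : H) : Type :=
  {p : H * int | (p.2 %% N)%Z == p.2}.

Section Ext.
Variables (H : topologicalZmodType) (N : int) (h0' : H).
Definition hz := if N == 0 then 0 else h0'.
Lemma Nhz : N = 0 -> hz = 0.
Proof. by rewrite /hz => ->; rewrite eqxx. Qed.

Definition npred (p : H * int) := (p.2 %% N)%Z == p.2.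
Local Notation Tc := (@Tc H N h0').
Definition hh (x : Tc) := (val x).1.
Definition ii (x : Tc) := (val x).2.
Lemma npred_mk h i : npred (h, (i %% N)%Z).
Proof. by rewrite /npred /= modz_mod. Qed.
Definition mk h i : Tc := exist _ (h, (i %% N)%Z) (npred_mk h i).
Definition nrm (p : H * int) : Tc := mk (p.1 + hz *~ (p.2 %/ N)%Z) p.2.

Lemma Tc_eq (x y : Tc) : hh x = hh y -> ii x = ii y -> x = y.
Proof.
move=> e1 e2; apply: val_inj.
by rewrite [val x]surjective_pairing [val y]surjective_pairing; congr pair.
Qed.

Lemma hh_mk h i : hh (mk h i) = h. Proof. by []. Qed.
Lemma ii_mk h i : ii (mk h i) = (i %% N)%Z. Proof. by []. Qed.
Lemma ii_norm (x : Tc) : (ii x %% N)%Z = ii x.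
Proof. by apply/eqP; exact: (valP x). Qed.
Lemma mk_val (x : Tc) : mk (hh x) (ii x) = x.
Proof. by apply: Tc_eq => //; rewrite ii_mk ii_norm. Qed.

Lemma nrm_shift h i q : nrm (h + hz *~ q, i - q * N) = nrm (h, i).
Proof.
have [N0|N0] := eqVneq N 0.
  rewrite (Nhz N0) mul0rz addr0; congr nrm; congr pair.
  by rewrite N0 mulr0 subr0.
apply: Tc_eq; rewrite /nrm /= ?hh_mk ?ii_mk.
  rewrite -mulNr [i + _]addrC divzMDl // mulrzDr mulrNz addrA addrK //.
by rewrite -mulNr [i + _]addrC modzMDl.
Qed.

Lemma val_nrm p : val (nrm p) = (p.1 + hz *~ (p.2 %/ N)%Z, p.2 - (p.2 %/ N)%Z * N).
Proof.
rewrite /=; congr pair; apply/eqP; rewrite eq_sym subr_eq addrC.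
Qed.

Lemma div_norm (x : Tc) : (ii x %/ N)%Z = 0.
Proof.
have [->|N0] := eqVneq N 0; first by rewrite divz0.
have := divz_eq (ii x) N; rewrite ii_norm -{1}[ii x]add0r => /addIr/esym/eqP.
by rewrite mulf_eq0 (negPf N0) orbF => /eqP.
Qed.

Lemma nrm_val (x : Tc) : nrm (val x) = x.
Proof.
apply: Tc_eq; rewrite /nrm /= ?hh_mk ?ii_mk -?/(ii x) ?ii_norm //.
by rewrite div_norm mulr0z addr0.
Qed.

Definition padd (p q : H * int) := (p.1 + q.1, p.2 + q.2).

Lemma nrm_paddr p q : nrm (padd p (val (nrm q))) = nrm (padd p q).
Proof.
by rewrite val_nrm /padd /= !addrA nrm_shift.
Qed.

Lemma nrm_paddl p q : nrm (padd (val (nrm p)) q) = nrm (padd p q).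
Proof.
have C u v : padd u v = padd v u by rewrite /padd addrC [u.2 + _]addrC.
by rewrite C nrm_paddr C.
Qed.

Definition Tzero : Tc := mk 0 0.
Definition Tadd (x y : Tc) : Tc := nrm (padd (val x) (val y)).
Definition Topp (x : Tc) : Tc := nrm (- (val x).1, - (val x).2).

Lemma TaddA : associative Tadd.
Proof.
move=> x y z; rewrite /Tadd nrm_paddr nrm_paddl /padd /=.
by rewrite !addrA.
Qed.
Lemma TaddC : commutative Tadd.
Proof. by move=> x y; rewrite /Tadd /padd addrC [(val x).2 + _]addrC. Qed.
Lemma Tadd0 : left_id Tzero Tadd.
Proof.
move=> x; rewrite /Tadd /padd /= mod0z !add0r.
by rewrite -[X in nrm X]surjective_pairing nrm_val.
Qed.
Lemma TaddN : left_inverse Tzero Topp Tadd.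
Proof.
move=> x; rewrite /Tadd /Topp nrm_paddl /padd /= !addNr.
have d0 : ((0 : int) %/ N)%Z = 0 := div0z N.
have m0 : ((0 : int) %% N)%Z = 0 := mod0z N.
by apply: Tc_eq; rewrite /nrm /= ?hh_mk ?ii_mk ?d0 ?m0 ?mulr0z ?addr0.
Qed.

HB.instance Definition _ := Choice.copy Tc {p : H * int | npred p}.
HB.instance Definition _ := GRing.isZmodule.Build Tc TaddA TaddC Tadd0 TaddN.

Lemma addTE (x y : Tc) : x + y = nrm (padd (val x) (val y)). Proof. by []. Qed.
Lemma oppTE (x : Tc) : - x = nrm (- (val x).1, - (val x).2). Proof. by []. Qed.
Lemma zeroTE : (0 : Tc) = mk 0 0. Proof. by []. Qed.
Lemma subTE (x y : Tc) : x - y = nrm (hh x - hh y, ii x - ii y).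
Proof. by rewrite addTE oppTE nrm_paddr. Qed.
Lemma nrmE p : nrm p = mk (p.1 + hz *~ (p.2 %/ N)%Z) p.2. Proof. by []. Qed.
Lemma val_mk h i : val (mk h i) = (h, (i %% N)%Z). Proof. by []. Qed.
Lemma mod0N : ((0%R : int) %% N)%Z = 0%R. Proof. exact: mod0z. Qed.
Lemma div0N : ((0%R : int) %/ N)%Z = 0%R. Proof. exact: div0z. Qed.
End Ext.
Arguments hh : simpl never.
Arguments ii : simpl never.
Arguments mk : simpl never.
Arguments nrm : simpl never.

Section TZ.
Variable M : topologicalZmodType.
Lemma shift_cont (c : M) : continuous (fun z => z + c).
Proof.
move=> z.
apply: (@continuous_comp _ _ _ (fun z => (z, c)) (fun p : M * M => p.1 + p.2)).
  by apply: cvg_pair; [exact: cvg_id | exact: cvg_cst].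
exact: add_continuous.
Qed.
Lemma shiftl_cont (c : M) : continuous (fun z => c + z).
Proof.
move=> z; rewrite /continuous_at.
rewrite -(@eq_cvg _ _ _ (fun z => z + c)); last by move=> y; exact: addrC.
by rewrite addrC; apply: shift_cont.
Qed.
End TZ.

Section Top.
Variables (H : topologicalZmodType) (N : int) (h0 : H).
Local Notation Tc := (@Tc H N h0).
Local Notation mk := (@mk H N h0).
Local Notation hh := (@hh H N h0).
Local Notation ii := (@ii H N h0).

Definition slice (U : set Tc) (i : int) : set H := [set h | U (mk h i)].
Definition Top (U : set Tc) := forall i, open (slice U i).

Lemma TopT : Top setT.
Proof. by move=> i; rewrite /slice; exact: (@openT H). Qed.
Lemma TopI : setI_closed Top.
Proof. by move=> A B oA oB i; exact: (@openI H _ _ (oA i) (oB i)). Qed.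
Lemma Top_bigU (I : Type) (f : I -> set Tc) : (forall i, Top (f i)) -> Top (\bigcup_i f i).
Proof.
move=> fo i; have -> : slice (\bigcup_j f j) i = \bigcup_j slice (f j) i by [].
by apply: bigcup_open => j _; exact: fo.
Qed.

HB.instance Definition _ := isOpenTopological.Build Tc TopT TopI Top_bigU.

Lemma openTE (U : set Tc) : open U <-> Top U.
Proof. by []. Qed.

Lemma mk_mod h i : mk h (i %% N)%Z = mk h i.
Proof. by apply: Tc_eq => //; rewrite !ii_mk modz_mod. Qed.

Lemma mk_hi (x : Tc) : mk (hh x) (ii x) = x.
Proof. exact: mk_val. Qed.

Lemma ii_mk_ii h (x : Tc) : ii (mk h (ii x)) = ii x.
Proof. by rewrite ii_mk ii_norm. Qed.

Lemma open_fiber (i : int) (S : set H) : open S ->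
  open [set y : Tc | ii y = (i %% N)%Z /\ S (hh y)].
Proof.
move=> oS; apply/openTE => k; rewrite /slice /=.
have [e|ne] := eqVneq (k %% N)%Z (i %% N)%Z.
  rewrite (_ : [set _ | _] = S) //; apply/seteqP; split=> h /=; rewrite ii_mk hh_mk e.
    by case.
  by [].
rewrite (_ : [set _ | _] = set0); first exact: open0.
apply/seteqP; split=> h //=; rewrite ii_mk => -[/eqP]; rewrite (negPf ne).
by [].
Qed.

Lemma nbhsTE (x : Tc) (A : set Tc) : nbhs x A <-> nbhs (hh x) (slice A (ii x)).
Proof.
split.
  move=> [B [oB Bx BA]]; rewrite nbhsE; exists (slice B (ii x)).
    split; [exact: oB | rewrite /slice /=]. by rewrite (mk_hi x).
  by move=> h; exact: BA.
move=> /nbhs_interior Sx.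
suff : nbhs_of_open Top x A by [].
exists [set y : Tc | ii y = (ii x %% N)%Z /\ (slice A (ii x))° (hh y)]; split.
- exact: open_fiber (@open_interior _ _).
- by split; [rewrite ii_norm | exact: nbhs_singleton Sx].
- move=> y [e /interior_subset]; rewrite ii_norm in e.
  by rewrite /slice -e /= (mk_hi y).
Qed.



Lemma Tsub_cont : continuous (fun p : Tc * Tc => p.1 - p.2).
Proof.
move=> [x y] A /nbhsTE /=.
set i := ii x - ii y; set c := hz N h0 *~ (i %/ N)%Z.
have e x' y' : ii x' = ii x -> ii y' = ii y -> x' - y' = mk (hh x' - hh y' + c) i.
  by move=> ex ey; rewrite subTE nrmE /= ex ey.
rewrite (e x y) // hh_mk ii_mk => HS.
have HS' : nbhs (hh x - hh y + c) [set h | A (mk h i)].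
  by apply: filterS HS => h; rewrite /slice /= mk_mod.
have cf : continuous (fun p : H * H => p.1 - p.2 + c).
  move=> p; apply: (@continuous_comp _ _ _ (fun p : H * H => p.1 - p.2) (fun z => z + c)).
    exact: sub_continuous.
  exact: shift_cont.
have := cf (hh x, hh y) _ HS'; case=> [[P Q] [/= nP nQ] PQS].
exists ([set x' | ii x' = ii x /\ P (hh x')], [set y' | ii y' = ii y /\ Q (hh y')]).
  split; apply/nbhsTE.
    by apply: filterS nP => h Ph; split; [exact: ii_mk_ii | rewrite hh_mk].
  by apply: filterS nQ => h Ph; split; [exact: ii_mk_ii | rewrite hh_mk].
move=> [x' y'] /= [[ex Px] [ey Qy]].
rewrite /= (e x' y') //.
exact: (PQS (hh x', hh y')).
Qed.

HB.instance Definition _ := PreTopologicalNmodule_isTopologicalZmodule.Build Tc Tsub_cont.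

End Top.

Section TcProps.
Variables (H : topologicalZmodType) (N : int) (h0 : H).
Local Notation Tc := (@Tc H N h0).
Local Notation mk := (@mk H N h0).
Local Notation hh := (@hh H N h0).
Local Notation ii := (@ii H N h0).

Definition sl (i : int) (h : H) : Tc := mk h i.
Definition jj (h : H) : Tc := mk h 0.

Lemma nbhs_lift (x : Tc) (A : set H) : nbhs (hh x) A ->
  nbhs x [set z : Tc | ii z = ii x /\ A (hh z)].
Proof.
move=> nA; apply/nbhsTE; apply: filterS nA => h Ah.
by rewrite /slice /=; split; [exact: ii_mk_ii | rewrite hh_mk].
Qed.

Lemma sl_cont i : continuous (sl i).
Proof.
move=> h A /nbhsTE; rewrite /sl hh_mk ii_mk => nA.
by apply: filterS nA => h'; rewrite /slice /= mk_mod.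
Qed.

Lemma jj_cont : continuous jj.
Proof. exact: sl_cont. Qed.

Lemma hh_cont : continuous hh.
Proof.
move=> x A nA; apply/nbhsTE; apply: filterS nA => h Ah.
by rewrite /slice /= hh_mk.
Qed.

Lemma jj_inj : injective jj.
Proof. by move=> x y e; have := congr1 hh e; rewrite /jj !hh_mk. Qed.

Lemma jj_add x y : jj (x + y) = jj x + jj y.
Proof.
rewrite addTE nrmE /jj !val_mk /padd /= !mod0N addr0 div0N mulr0z addr0.
by [].
Qed.


Lemma ii_jj h : ii (jj h) = 0. Proof. by rewrite /jj ii_mk mod0N. Qed.
Lemma hh_jj h : hh (jj h) = h. Proof. by rewrite /jj hh_mk. Qed.

Lemma jj_img (A : set H) : jj @` A = [set y | ii y = 0 /\ A (hh y)].
Proof.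
apply/seteqP; split => [y [a Aa <-]|y [e Ay]].
  by split; [exact: ii_jj | rewrite hh_jj].
by exists (hh y) => //; apply: Tc_eq; rewrite ?hh_jj ?ii_jj.
Qed.

Lemma jj_open (U : set H) : open U -> open (jj @` U).
Proof.
move=> oU; rewrite jj_img; have := @open_fiber H N h0 0 U oU.
by rewrite mod0N.
Qed.

Lemma range_jj_open : open (range jj).
Proof. exact: jj_open openT. Qed.

Lemma range_jj_closed : closed (range jj).
Proof.
rewrite -openC; apply/openTE => k; rewrite /slice /=.
have [e|ne] := eqVneq (k %% N)%Z 0.
  rewrite (_ : [set _ | _] = set0); first exact: open0.
  apply/seteqP; split=> h //= /(_ _); apply; exists h => //.
  by apply: Tc_eq; rewrite ?hh_jj ?hh_mk // ii_jj ii_mk e.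
rewrite (_ : [set _ | _] = setT); first exact: openT.
apply/seteqP; split=> h //= _ [h' _ e]; move: ne; rewrite -(@ii_mk H N h0 h k) -e ii_jj.
by rewrite eqxx.
Qed.


Lemma closure_jj (A : set H) : closure (jj @` A) = jj @` closure A.
Proof.
apply/seteqP; split => [x clx|x [a cla <-]].
  have ex : ii x = 0.
    apply/eqP/negPn/negP => ne.
    have nB : nbhs x [set z | ii z = ii x /\ setT (hh z)] by apply: nbhs_lift; exact: filterT.
    have [z [[a _ <-] [e _]]] := clx _ nB.
    by move: ne; rewrite -e ii_jj eqxx.
  have -> : x = jj (hh x) by apply: Tc_eq; rewrite ?hh_jj ?ii_jj.
  exists (hh x) => // B nB.
  have [z [[a Aa <-] [e Bz]]] := clx _ (nbhs_lift nB).
  by exists a; split => //; rewrite hh_jj in Bz.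
move=> B nB; have := jj_cont nB => /cla [a' [Aa' Ba']].
by exists (jj a'); split => //; exists a'.
Qed.

Lemma interior_jj (A : set H) : interior (jj @` A) = jj @` interior A.
Proof.
apply/seteqP; split => [x nx|x [a nA <-]].
  have [a Aa ea] := nbhs_singleton nx; rewrite -ea in nx *.
  exists a => //; have h1 : nbhs a (jj @^-1` (jj @` A)) := jj_cont nx.
  by apply: filterS h1 => h [h' Ah' /jj_inj <-].
apply/nbhsTE; rewrite ii_jj hh_jj; apply: filterS nA => h Ah.
by rewrite /slice /=; exists h.
Qed.


Lemma Tc_hausdorff : hausdorff_space H -> hausdorff_space Tc.
Proof.
move=> hH x y clxy.
have nA : nbhs x [set z | ii z = ii x /\ setT (hh z)] by apply: nbhs_lift; exact: filterT.
have nB : nbhs y [set z | ii z = ii y /\ setT (hh z)] by apply: nbhs_lift; exact: filterT.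
have ei : ii x = ii y.
  by have [z [[e1 _] [e2 _]]] := clxy _ _ nA nB; rewrite -e1 e2.
apply: Tc_eq => //; apply: hH => A B nA' nB'.
have [z [[_ Az] [_ Bz]]] := clxy _ _ (nbhs_lift nA') (nbhs_lift nB').
by exists (hh z).
Qed.

Lemma Tc_lc : locally_compact_space H -> locally_compact_space Tc.
Proof.
move=> lc x; have [K [nK cK]] := lc (hh x).
exists (sl (ii x) @` K); split.
  apply/nbhsTE; apply: filterS nK => h Kh; rewrite /slice /=; by exists h.
apply: continuous_compact => //; apply: continuous_subspaceT; exact: sl_cont.
Qed.

Lemma Tc_metr : metrisable H -> metrisable Tc.
Proof.
move=> [d [d0 dE dC dT dO]].
pose I (x y : Tc) : RR := if ii x == ii y then 0%R else 1%R.
have I0 x y : 0 <= I x y by rewrite /I; case: ifP.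
have I1 x y : I x y != 0 -> 1 <= I x y by rewrite /I; case: ifP => //; rewrite eqxx.
have IC x y : I x y = I y x by rewrite /I eq_sym.
have IT x y z : I x z <= I x y + I y z.
  rewrite /I; case: (ii x =P ii y) => exy; case: (ii y =P ii z) => eyz;
  case: (ii x =P ii z) => exz; try lra.
  by exfalso; apply: exz; rewrite exy.
exists (fun x y => d (hh x) (hh y) + I x y); split.
- by move=> x y; apply: addr_ge0.
- move=> x y; split => [/eqP|->]; last by rewrite (proj2 (dE _ _) erefl) /I eqxx addr0.
  rewrite paddr_eq0 // => /andP[/eqP /dE e1 /eqP e2].
  apply: Tc_eq => //; move: e2; rewrite /I; case: ifP => [/eqP //|_ /eqP].
  by rewrite oner_eq0.
- by move=> x y; rewrite dC IC.
- by move=> x y z; rewrite addrACA; apply: lerD.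
move=> A; split.
  move=> /openTE oA x Ax.
  have : slice A (ii x) (hh x) by rewrite /slice /= (mk_hi x).
  move=> /((proj1 (dO _)) (oA (ii x))) [e e0 be].
  exists (Num.min e 1); first by rewrite lt_min e0 ltr01.
  move=> y /= dy.
  have Iz : I x y = 0.
    apply/eqP/negPn/negP => /I1 h1.
    have := d0 (hh x) (hh y); move: dy; rewrite lt_min => /andP[_]; lra.
  have ey : ii x = ii y by move: Iz; rewrite /I; case: ifP => [/eqP //|_ /eqP]; rewrite oner_eq0.
  have := be (hh y); rewrite /slice /= ey (mk_hi y); apply.
  by move: dy; rewrite Iz addr0 lt_min => /andP[].
move=> hA; apply/openTE => k; apply/(proj2 (dO _)) => h Ah.
have [e e0 be] := hA _ Ah; exists e => // h' dh'; rewrite /slice /=.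
apply: be; rewrite /= !hh_mk /I !ii_mk eqxx addr0 //.
Qed.

End TcProps.

Lemma image_setD_inj (T U : Type) (f : T -> U) (A B : set T) : injective f ->
  f @` (A `\` B) = f @` A `\` f @` B.
Proof.
move=> fi; apply/seteqP; split => [u [t [At nBt] <-]|u [[t At <-] nB]].
  by split; [exists t | move=> [t' Bt' /fi e]; apply: nBt; rewrite -e].
by exists t => //; split => // Bt; apply: nB; exists t.
Qed.

Section Shift.
Variables (M : topologicalZmodType) (b : M).

Lemma sh_pre (X : set M) : [set b + y | y in X] = (fun z => -b + z) @^-1` X.
Proof.
apply/seteqP; split => [z [y Xy <-]|z Xz]; first by rewrite /= addKr.
by exists (-b + z) => //; rewrite addNKr.
Qed.

Local Notation sh X := [set b + y | y in X].

Lemma nbhs_sh y (X : set M) : nbhs y X -> nbhs (b + y) (sh X).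
Proof.
move=> nX; rewrite sh_pre.
have nX' : nbhs (-b + (b + y)) X by rewrite addKr.
exact: (@shiftl_cont _ (-b) (b + y) X nX').
Qed.

Lemma nbhs_sh' y (X : set M) : nbhs (b + y) (sh X) -> nbhs y X.
Proof.
move=> nX; have c : nbhs y ((fun z => b + z) @^-1` (sh X)) := @shiftl_cont _ b y _ nX.
by apply: filterS c => z [z' Xz' /addrI <-].
Qed.

Lemma closure_sh (X : set M) : closure (sh X) = sh (closure X).
Proof.
apply/seteqP; split => [p clp|p [y cly <-]].
  exists (-b + p); last by rewrite addNKr.
  move=> B nB; have := nbhs_sh nB; rewrite addNKr => /clp [q [[x Xx <-] [y By /addrI e]]].
  by exists x; split => //; rewrite -e.
move=> B nB; have c : nbhs y ((fun z => b + z) @^-1` B) := @shiftl_cont _ b y _ nB.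
have [x [Xx Bx]] := cly _ c; by exists (b + x); split => //; exists x.
Qed.

Lemma interior_sh (X : set M) : interior (sh X) = sh (interior X).
Proof.
apply/seteqP; split => [p np|p [y ny <-]].
  exists (-b + p); last by rewrite addNKr.
  by apply: nbhs_sh'; rewrite addNKr.
exact: nbhs_sh.
Qed.

Lemma compact_sh (K : set M) : compact K -> compact (sh K).
Proof.
move=> cK; apply: continuous_compact => //; apply: continuous_subspaceT.
exact: shiftl_cont.
Qed.

Lemma boundary_sh (X : set M) : boundary (sh X) = sh (boundary X).
Proof. by rewrite /boundary closure_sh interior_sh image_setD_inj //; exact: addrI. Qed.

Lemma precompact_sh (X : set M) : precompact_set X -> precompact_set (sh X).
Proof. by rewrite /precompact_set closure_sh; exact: compact_sh. Qed.

Lemma nei_sh (X : set M) : nonempty_interior X -> nonempty_interior (sh X).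
Proof. by rewrite /nonempty_interior interior_sh => -[y iy]; exists (b + y), y. Qed.

Lemma treg_sh (X : set M) : topologically_regular X -> topologically_regular (sh X).
Proof. by rewrite /topologically_regular closure_sh interior_sh closure_sh => ->. Qed.

End Shift.

Section JJ.
Variables (H : topologicalZmodType) (N : int) (h0 : H).
Local Notation jj := (@jj H N h0).

Lemma boundary_jj (W : set H) : boundary (jj @` W) = jj @` boundary W.
Proof. by rewrite /boundary closure_jj interior_jj image_setD_inj //; exact: jj_inj. Qed.

Lemma precompact_jj (W : set H) : precompact_set W -> precompact_set (jj @` W).
Proof.
rewrite /precompact_set closure_jj => cW; apply: continuous_compact => //.
apply: continuous_subspaceT; exact: jj_cont.
Qed.

Lemma nei_jj (W : set H) : nonempty_interior W -> nonempty_interior (jj @` W).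
Proof. by rewrite /nonempty_interior interior_jj => -[y iy]; exists (jj y), y. Qed.

Lemma treg_jj (W : set H) : topologically_regular W -> topologically_regular (jj @` W).
Proof. by rewrite /topologically_regular closure_jj interior_jj closure_jj => ->. Qed.

End JJ.

Section Borel.
Variable T : topologicalType.
Lemma borel_open (A : set T) : open A -> borel A.
Proof. by move=> oA; apply: sub_sigma_algebra. Qed.
Lemma borelC (A : set T) : borel A -> borel (~` A).
Proof. by move=> bA; rewrite -setTD; exact: sigma_algebraCD. Qed.
Lemma borel_bigcup (F : (set T)^nat) : (forall n, borel (F n)) -> borel (\bigcup_n F n).
Proof. exact: sigma_algebra_bigcup. Qed.
Lemma borelU (A B : set T) : borel A -> borel B -> borel (A `|` B).
Proof.
move=> bA bB; have -> : A `|` B = \bigcup_n (if n == 0%N then A else B).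
  apply/seteqP; split => [x [Ax|Bx]|x [n _]]; first by exists 0%N.
    by exists 1%N.
  by case: ifP => _ ?; [left|right].
by apply: borel_bigcup => n; case: ifP.
Qed.
Lemma borelI (A B : set T) : borel A -> borel B -> borel (A `&` B).
Proof.
move=> bA bB; rewrite -[A `&` B]setCK setCI.
by apply: borelC; apply: borelU; exact: borelC.
Qed.
Lemma borelD (A B : set T) : borel A -> borel B -> borel (A `\` B).
Proof. by move=> bA bB; apply: borelI => //; exact: borelC. Qed.
Lemma borel_closed (A : set T) : closed A -> borel A.
Proof. by move=> cA; rewrite -[A]setCK; apply: borelC; apply: borel_open; rewrite openC. Qed.
Lemma borel_boundary (A : set T) : borel (boundary A).
Proof.
apply: borelD; first by apply: borel_closed; exact: closed_closure.
by apply: borel_open; exact: open_interior.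
Qed.
End Borel.

Section HaarGen.
Variables (T : topologicalZmodType) (mu : set T -> \bar RR).
Hypothesis hmu : is_haar_measure mu.

Lemma haar_mono (A B : set T) : borel A -> borel B -> A `<=` B -> (mu A <= mu B)%E.
Proof.
move=> bA bB AB.
have [_ [_ [_ [_ [_ [outer _]]]]]] := hmu.
rewrite (outer _ bA) (outer _ bB); apply: ereal_inf_le_tmp.
move=> _ [U [oU BU] <-]; exists U => //; split => //; exact: subset_trans BU.
Qed.

Lemma haar_shift_borel (x : T) (A : set T) : borel A -> mu [set x + a | a in A] = mu A.
Proof. by have [_ [_ [_ [sh _]]]] := hmu; exact: sh. Qed.

End HaarGen.

Lemma mreg_sh (M : topologicalZmodType) (b : M) (X : set M) :
  measure_regular X -> measure_regular [set b + y | y in X].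
Proof.
move=> mX mu hmu; rewrite boundary_sh (haar_shift_borel hmu) ?mX //.
exact: borel_boundary.
Qed.

Section HaarJ.
Variables (H : topologicalZmodType) (N : int) (h0 : H).
Local Notation Tc := (@Tc H N h0).
Local Notation jj := (@jj H N h0).
Local Notation hh := (@hh H N h0).
Local Notation ii := (@ii H N h0).
Local Notation mk := (@mk H N h0).

Lemma borel_jj (A : set H) : borel A -> borel (jj @` A).
Proof.
move=> bA; suff : <<s (@open H) >> `<=` [set A | borel (jj @` A)] by apply.
apply: smallest_sub; last by move=> U oU; apply: borel_open; exact: jj_open.
split.
- by rewrite /= image_set0; apply: borel_open; exact: open0.
- move=> B bB; rewrite /= image_setD_inj; last exact: jj_inj.
  apply: borelD => //; apply: borel_open; exact: range_jj_open.
- by move=> F bF; rewrite /= image_bigcup; exact: borel_bigcup.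
Qed.

Lemma jj_img_shift (x : H) (A : set H) :
  jj @` [set x + a | a in A] = [set jj x + y | y in jj @` A].
Proof.
apply/seteqP; split => [_ [_ [a Aa <-] <-]|_ [_ [a Aa <-] <-]].
  by exists (jj a); [exists a | rewrite jj_add].
by exists (x + a); [exists a | rewrite jj_add].
Qed.

Lemma add_jj (x : Tc) h : x + jj h = mk (hh x + h) (ii x).
Proof.
rewrite addTE /jj val_mk mod0N /padd /= addr0 nrmE /=.
by rewrite -/(ii x) div_norm mulr0z addr0.
Qed.

Lemma fiber_shift (x : Tc) : [set y : Tc | ii y = ii x] = [set x + y | y in range jj].
Proof.
apply/seteqP; split => [y ey|_ [_ [h _ <-] <-]].
  exists (jj (hh y - hh x)); first by exists (hh y - hh x).
  by rewrite add_jj addrC subrK -ey (mk_hi y).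
by rewrite /= add_jj ii_mk ii_norm.
Qed.


Lemma fiber_open (x : Tc) : open [set y : Tc | ii y = ii x].
Proof.
have := @open_fiber H N h0 (ii x) setT openT; rewrite ii_norm.
by rewrite (_ : [set y | _ /\ _] = [set y | ii y = ii x]) //; apply/seteqP; split => y //= [].
Qed.

Lemma haar_jj (mu : set Tc -> \bar RR) : is_haar_measure mu ->
  is_haar_measure (fun A : set H => mu (jj @` A)).
Proof.
move=> hmu; have [m0 [mge0 [madd [msh [mcpt [mout [minn [A0 [bA0 mA0]]]]]]]]] := hmu.
split; [|split; [|split; [|split; [|split; [|split; [|split]]]]]].
- by rewrite image_set0.
- by move=> A bA; apply: mge0; exact: borel_jj.
- move=> F bF tF; rewrite image_bigcup; apply: madd.
    by move=> n; exact: borel_jj.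
  move=> i j _ _ [_ [[a Fia <-] [b Fjb /jj_inj eb]]].
  by apply: (tF i j) => //; exists a; split => //; rewrite -eb.
- by move=> x A bA; rewrite jj_img_shift; apply: msh; exact: borel_jj.
- move=> K cK; apply: mcpt; apply: continuous_compact => //.
  by apply: continuous_subspaceT; exact: jj_cont.
- move=> A bA; rewrite (mout _ (borel_jj bA)); apply/le_anti/andP; split.
    apply: ereal_inf_le_tmp => _ [U [oU AU] <-]; exists (jj @` U) => //; split.
      exact: jj_open.
    exact: image_subset.
  apply: le_ereal_inf_tmp => _ [V [oV AV] <-]; apply: ge_ereal_inf.
  exists (mu (jj @` (jj @^-1` V))).
    exists (jj @^-1` V) => //; split.
      by apply: open_comp => // x _; exact: jj_cont.
    by move=> a Aa; apply: AV; exists a.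
  apply: (haar_mono hmu).
  - apply: borel_open; apply: jj_open; apply: open_comp => // x _; exact: jj_cont.
  - exact: borel_open.
  - by move=> _ [u Vu <-].
- move=> U oU; rewrite (minn _ (@jj_open H N h0 _ oU)); congr ereal_sup; apply/seteqP; split.
    move=> _ [K' [cK' K'U] <-]; exists (hh @` K').
      split.
        apply: continuous_compact => //; apply: continuous_subspaceT; exact: hh_cont.
      by move=> _ [x K'x <-]; have [u Uu <-] := K'U _ K'x; rewrite hh_jj.
    congr mu; apply/seteqP; split => [_ [_ [x K'x <-] <-]|x K'x].
      by have [u Uu ex] := K'U _ K'x; rewrite -ex hh_jj ex.
    have [u Uu ex] := K'U _ K'x.
    by exists (hh x); [exists x | rewrite -ex hh_jj].
  move=> _ [K [cK KU] <-]; exists (jj @` K) => //; split.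
    by apply: continuous_compact => //; apply: continuous_subspaceT; exact: jj_cont.
  exact: image_subset.
- exists setT; split; first by apply: borel_open; exact: openT.
  apply/negP => /eqP mj0.
  have fib0 x : mu [set y : Tc | ii y = ii x] = 0%E.
    rewrite fiber_shift msh //; apply: borel_open; exact: range_jj_open.
  pose F k := [set y : Tc | pickle (ii y) = k].
  have pickle_inj : injective (@pickle int) := pcan_inj pickleK_inv.
  have F0 k : mu (F k) = 0%E.
    have [[x Fx]|nF] := pselect (exists x, F k x).
      rewrite -(fib0 x); congr mu; apply/seteqP; split => y /=.
        by rewrite /F /= => e; apply: pickle_inj; rewrite e Fx.
      by move=> e; rewrite /F /= e; exact: Fx.
    rewrite (_ : F k = set0) //; apply/seteqP; split => y //= Fy.
    by apply: nF; exists y.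
  have bF k : borel (F k).
    have [[x Fx]|nF] := pselect (exists x, F k x).
      rewrite (_ : F k = [set y : Tc | ii y = ii x]); first by apply: borel_open; exact: fiber_open.
      apply/seteqP; split => y /=; first by rewrite /F /= => e; apply: pickle_inj; rewrite e Fx.
      by move=> e; rewrite /F /= e; exact: Fx.
    rewrite (_ : F k = set0); first by apply: borel_open; exact: open0.
    by apply/seteqP; split => y //= Fy; apply: nF; exists y.
  have tF : trivIset setT F by move=> i j _ _ [y [<- <-]].
  have UF : \bigcup_k F k = setT.
    by apply/seteqP; split => y // _; exists (pickle (ii y)).
  have c := madd F bF tF; rewrite UF in c.
  have seq0 : (fun n => \sum_(k < n) mu (F k)) = (fun _ => 0%E).
    by apply: funext => n; rewrite big1.
  rewrite seq0 in c.
  have mT : mu setT = 0%E.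
    apply: (@cvg_unique _ (@ereal_hausdorff _) _ _ _ _ c); exact: cvg_cst.
  have := haar_mono hmu bA0 (borel_open openT) (@subsetT _ A0).
  rewrite mT => mle; move: mA0; rewrite eq_le mle /=.
  by rewrite mge0.
Qed.

Lemma mreg_jj (W : set H) : measure_regular W -> measure_regular (jj @` W).
Proof.
move=> mW mu hmu; rewrite boundary_jj.
exact: (mW _ (haar_jj hmu)).
Qed.

End HaarJ.

Section Sgp.
Variables (G H : zmodType) (L : set (G * H)).
Hypothesis sL : is_pair_subgroup L.

Lemma L0 : L (0, 0). Proof. by case: sL. Qed.
Lemma Lsub g h g' h' : L (g, h) -> L (g', h') -> L (g - g', h - h').
Proof. by case: sL => _ S Lp Lq; exact: (S _ _ Lp Lq). Qed.
Lemma Lopp g h : L (g, h) -> L (- g, - h).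
Proof. by move=> Lp; have := Lsub L0 Lp; rewrite !sub0r. Qed.
Lemma Ladd g h g' h' : L (g, h) -> L (g', h') -> L (g + g', h + h').
Proof. by move=> Lp /Lopp Lq; have := Lsub Lp Lq; rewrite !opprK. Qed.
Lemma Lmuln g h n : L (g, h) -> L (g *+ n, h *+ n).
Proof. by move=> Lp; elim: n => [|n IH]; [rewrite !mulr0n; exact: L0 | rewrite !mulrS; exact: Ladd]. Qed.
Lemma Lmulz g h k : L (g, h) -> L (g *~ k, h *~ k).
Proof.
move=> Lp; case: k => n; first by rewrite -!pmulrn; exact: Lmuln.
by rewrite !NegzE !mulrNz; apply: Lopp; rewrite -!pmulrn; exact: Lmuln.
Qed.
End Sgp.

Lemma zid (G : zmodType) (x y u v : G) : x - u - (y - v) = x - y - (u - v).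
Proof. by rewrite !opprB [LHS]addrACA [RHS]addrACA [- u + _]addrC. Qed.


Section Lat.
Variables (G H : topologicalZmodType) (L : set (G * H)) (a : G) (N : int) (h0 : H).
Hypothesis hL : cut_and_project L.
Hypothesis hNa : L (a *~ N, h0).
Hypothesis hdiv : forall k h, L (a *~ k, h) -> (N %| k)%Z.

Local Notation Tc := (@Tc H N h0).
Local Notation jj := (@jj H N h0).
Local Notation hh := (@hh H N h0).
Local Notation ii := (@ii H N h0).
Local Notation mk := (@mk H N h0).
Local Notation nrm := (@nrm H N h0).
Local Notation slice := (@slice H N h0).

Let sL : is_pair_subgroup L. Proof. by case: hL => _ _ []. Qed.

Definition Lp : set (G * Tc) := fun p => L (p.1 - a *~ ii p.2, hh p.2).

Lemma hNa' : L (a *~ N, hz N h0).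
Proof.
rewrite /hz; case: eqP => [->|//]; rewrite mulr0z; exact: L0.
Qed.

Lemma Lp_nrm g h i : Lp (g, nrm (h, i)) <-> L (g - a *~ i, h).
Proof.
rewrite /Lp /= nrmE hh_mk ii_mk /=.
set q := (i %/ N)%Z.
have e : (i %% N)%Z = i - q * N by apply/eqP; rewrite eq_sym subr_eq addrC; exact/eqP/divz_eq.
have X : L (a *~ N *~ q, hz N h0 *~ q) by apply: Lmulz => //; exact: hNa'.
rewrite e mulrzBr [q * N]mulrC mulrzA opprB addrA addrAC.
split => H1.
  by have := Lsub sL H1 X; rewrite !addrK.
by have := Ladd sL H1 X.
Qed.


Lemma Lp_sub : is_pair_subgroup Lp.
Proof.
split.
  rewrite /Lp /pair_zero /= zeroTE hh_mk ii_mk mod0N mulr0z subr0; exact: (L0 sL).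
move=> p q Lpp Lpq; rewrite /pair_sub.
have -> : p.2 - q.2 = nrm (hh p.2 - hh q.2, ii p.2 - ii q.2) by exact: subTE.
apply/Lp_nrm; have := Lsub sL Lpp Lpq.
by rewrite zid mulrzBr.
Qed.

Lemma Lp_inj : {in Lp &, injective (fun p : G * Tc => p.1)}.
Proof.
move=> [g x] [g' y]; rewrite !inE /Lp /= => Lx Ly e; subst g'.
have := Lsub sL Ly Lx; rewrite zid subrr sub0r opprB -mulrzBr => Ld.
have eI : ii x = ii y.
  have := hdiv Ld; rewrite -eqz_mod_dvd => /eqP.
  by rewrite !ii_norm.
rewrite eI subrr mulr0z in Ld.
have [_ _ _ fi _] := hL.
have := fi (0, hh y - hh x) (0, 0); rewrite !inE => /(_ Ld (L0 sL) erefl) [] /eqP.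
rewrite subr_eq0 => /eqP ehh.
by congr pair; apply: Tc_eq.
Qed.

Lemma Lp_dense : dense [set p.2 | p in Lp].
Proof.
move=> O [x Ox] oO.
have [_ _ _ _ dL] := hL.
have oS : open (slice O (ii x)) by apply: oO.
have Sx : slice O (ii x) (hh x) by rewrite /slice /= (mk_hi x).
have [h [Sh [[g h'] Lgh /= eh]]] := dL _ (ex_intro _ _ Sx) oS.
subst h'.
exists (mk h (ii x)); split => //.
exists (g + a *~ ii x, mk h (ii x)) => //.
by rewrite /Lp /= ii_mk ii_norm hh_mk addrK.
Qed.

Lemma Lp_discrete : discrete_subset Lp.
Proof.
move=> [g x] Lx; have [_ _ [_ dL _] _ _] := hL.
have [U [nU UL]] := dL _ Lx.
have Uc : U (g - a *~ ii x, hh x).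
  by have : [set (g - a *~ ii x, hh x)] (g - a *~ ii x, hh x) by []; rewrite -UL => -[].
case: nU => [[P Q] [/= nP nQ] PQU].
exists [set q : G * Tc | ii q.2 = ii x /\ U (q.1 - a *~ ii x, hh q.2)]; split.
  exists ([set g' | P (g' - a *~ ii x)], [set y | ii y = ii x /\ Q (hh y)]).
    split => /=; last exact: nbhs_lift nQ.
    exact: (@shift_cont _ (- (a *~ ii x)) g P nP).
  by move=> [g' y] /= [Pg' [ey Qy]]; split => //; apply: PQU; split.
apply/seteqP; split.
  move=> [g' y] [[/= ey Uy] Ly]; rewrite /Lp /= ey in Ly.
  have : (U `&` L) (g' - a *~ ii x, hh y) by split.
  rewrite UL => -[/addIr e1 e2].
  by rewrite /= e1; congr pair; apply: Tc_eq.
by move=> _ ->; split.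
Qed.

Lemma Lp_cocompact : cocompact_pair Lp.
Proof.
have [_ _ [_ _ [K [cK cov]]] _ _] := hL.
pose phi (k : G * H) : G * Tc := (k.1, jj k.2).
exists (phi @` K); split.
  apply: continuous_compact => //; apply: continuous_subspaceT => k.
  move=> A [[P Q] [/= nP nQ] PQA].
  exists (P, jj @^-1` Q); first by split => //; exact: jj_cont nQ.
  by move=> [g h] [Pg Qh]; apply: PQA.
move=> [g x]; have [k [l [Kk [Ll e]]]] := cov (g - a *~ ii x, hh x).
move: e; rewrite /pair_add => -[e1 e2].
exists (phi k), (l.1 + a *~ ii x, mk l.2 (ii x)); split; first by exists k.
split.
  by rewrite /Lp /= ii_mk ii_norm hh_mk addrK -surjective_pairing.
rewrite /pair_add /=; congr pair.
  by rewrite addrA -e1 subrK.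
rewrite addrC add_jj; apply: Tc_eq; rewrite hh_mk ?ii_mk ?hh_mk ?ii_norm //.
by rewrite e2 addrC.
Qed.

End Lat.

Lemma exists_N (G H : topologicalZmodType) (L : set (G * H)) (a : G) :
  cut_and_project L -> exists (N : int) (h0 : H),
    L (a *~ N, h0) /\ forall k h, L (a *~ k, h) -> (N %| k)%Z.
Proof.
move=> hL; have sL : is_pair_subgroup L by case: hL => _ _ [].
pose S (k : int) := exists h, L (a *~ k, h).
have [[k [[hk Sk] k0]]|nS] := pselect (exists k, S k /\ k != 0); last first.
  exists 0, 0; split; first by rewrite mulr0z; exact: (L0 sL).
  move=> k h Lk; have -> : k = 0; last exact: dvdz0.
  apply/eqP/negPn/negP => kn0; apply: nS; exists k; split => //; by exists h.
have [n [n0 Sn]] : exists n : nat, (0 < n)%N /\ S n.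
  move: k0 Sk; case: k => n kn0 Lk.
    exists n; split; last by exists hk.
    by rewrite lt0n; apply: contra kn0 => /eqP ->.
  exists n.+1; split => //; exists (- hk).
  by move: Lk => /(Lopp sL); rewrite NegzE mulrNz opprK.
pose P n := (0 < n)%N && `[< S n >].
have exP : exists n, P n by exists n; rewrite /P n0; apply/asboolP.
have [m /andP[m0 /asboolP [h0 Lm]] minm] := ex_minnP exP.
exists m, h0; split => // k' h Lk'.
set q := (k' %/ m)%Z; set r := (k' %% m)%Z.
have mz0 : (m%:Z != 0) by rewrite lt0n in m0; rewrite eqz_nat.
have er : r = k' - q * m by apply/eqP; rewrite eq_sym subr_eq addrC; exact/eqP/divz_eq.
have Sr : L (a *~ r, h - h0 *~ q).
  have := Lsub sL Lk' (Lmulz sL q Lm).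
  by rewrite er mulrzBr [q * _]mulrC mulrzA.
apply/dvdz_mod0P; rewrite -/r.
have r0 : 0 <= r by exact: modz_ge0.
have rm : r < m by apply: ltz_pmod; rewrite ltz_nat.
apply/eqP/negPn/negP => rn0.
have Pr : P `|r|%N.
  rewrite /P absz_gt0 rn0 /=; apply/asboolP; exists (h - h0 *~ q).
  by rewrite gez0_abs.
have := minm _ Pr; move: rm; rewrite -[X in X < _](gez0_abs r0) ltz_nat.
by rewrite ltnNge => /negP.
Qed.

Lemma bjj (H : topologicalZmodType) (N : int) (h0 : H) (w : H) :
  @nrm H N h0 (0, 1) + @jj H N h0 w = @nrm H N h0 (w, 1).
Proof.
by rewrite addTE nrm_paddl /jj val_mk mod0N /padd /= add0r addr0.
Qed.

Unset Implicit Arguments.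

Theorem theorem2p2 (G H : topologicalZmodType) (L : set (G * H)) (a : G) :
  cut_and_project L ->
  exists (H' : topologicalZmodType) (L' : set (G * H')) (j : H -> H') (b : H'),
    (cut_and_project L' /\
        (* (a) *) open_closed_subgroup_embedding j /\
        (* (b) *) L' (a, b) /\
        (* (c) *) (forall (g : G) (h : H), L' (g, j h) <-> L (g, h)) /\
        (* (d) *) (forall W : set H,
             proj_set L W = proj_set L' (j @` W) /\
             [set a + x | x in proj_set L W] =
               proj_set L' [set b + y | y in j @` W]) /\
        (* (e) *) (forall W : set H,
             (precompact_set W ->
                precompact_set (j @` W) /\ precompact_set [set b + y | y in j @` W]) /\
             (nonempty_interior W ->
                nonempty_interior (j @` W) /\ nonempty_interior [set b + y | y in j @` W]) /\
             (topologically_regular W ->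
                topologically_regular (j @` W) /\
                topologically_regular [set b + y | y in j @` W]) /\
             (measure_regular W ->
                measure_regular (j @` W) /\ measure_regular [set b + y | y in j @` W])) /\
        (* (f) *) (metrisable H -> metrisable H')).
Proof.
move=> hL; have [N [h0 [hNa hdiv]]] := exists_N a hL.
have sL : is_pair_subgroup L by case: hL => _ _ [].
exists (@Tc H N h0), (@Lp G H L a N h0), (@jj H N h0), (@nrm H N h0 (0, 1)).
have hc : forall g (h : H), @Lp G H L a N h0 (g, @jj H N h0 h) <-> L (g, h).
  by move=> g h; rewrite /Lp /= ii_jj hh_jj mulr0z subr0.
split.
  have [LG [hH lcH] _ _ _] := hL.
  split => //.
  - by split; [exact: Tc_hausdorff | exact: Tc_lc].
  - by split; [apply: Lp_sub | apply: Lp_discrete | apply: Lp_cocompact].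
  - by apply: Lp_inj.
  - by apply: Lp_dense.
split.
  split; [exact: jj_inj | exact: jj_add | exact: jj_cont | exact: jj_open |].
  by split; [exact: range_jj_open | exact: range_jj_closed].
split.
  by apply/(Lp_nrm hL hNa); rewrite mulr1z subrr; exact: (L0 sL).
split; first exact: hc.
split.
  move=> W; split.
    apply/seteqP; split.
      move=> _ [[g h] [Lgh Wh] <-]; exists (g, @jj H N h0 h) => //; split => /=.
        exact/hc.
      by exists h.
    move=> _ [[g x] [Lgx [h Wh /= ex]] <-]; rewrite /= -ex in Lgx.
    by exists (g, h) => //; split => //; exact/hc.
  apply/seteqP; split.
    move=> _ [_ [[g h] [Lgh Wh] <-] <-].
    exists (a + g, @nrm H N h0 (0, 1) + @jj H N h0 h) => //; split => /=.
      by rewrite bjj; apply/(Lp_nrm hL hNa); rewrite mulr1z addrC addKr.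
    by exists (@jj H N h0 h) => //; exists h.
  move=> _ [[g x] [Lgx [_ [h Wh <-] /= ex]] <-]; rewrite /= -ex bjj in Lgx.
  move/(Lp_nrm hL hNa): Lgx; rewrite mulr1z => Lgx.
  exists (g - a); last by rewrite /= addrC subrK.
  by exists (g - a, h).
split.
  move=> W; split.
    by move=> pW; split; [exact: precompact_jj | exact/precompact_sh/precompact_jj].
  split.
    by move=> pW; split; [exact: nei_jj | exact/nei_sh/nei_jj].
  split.
    by move=> pW; split; [exact: treg_jj | exact/treg_sh/treg_jj].
  by move=> pW; split; [exact: mreg_jj | exact/mreg_sh/mreg_jj].
exact: Tc_metr.
Qed.
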